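(* Let $X$ be a quasigeodesic metric space with bounded geometry (for example a connected graph with uniformly bounded vertex degrees, with its path metric). (i) If $\lim_{l\to\infty}\frac1l\log\big(\sup_{y\in X}|B(y,l)|\big)=0$, then $h_\infty(X)=0$. (ii) If $\limsup_{l\to\infty}\frac1l\log\big(\sup_{y\in X}|B(y,l)|\big)>0$, then $h_\infty(X)=\infty$.
   Context: $B(y,l)$ is the closed ball. $X$ is quasigeodesic if there are $C\ge1,A\ge0$ such that any $x,x'$ are joined by a map $p\colon[0,d(x,x')]\to X$, $p(0)=x$, $p(d(x,x'))=x'$, with $C^{-1}|s-t|-A\le d(p(s),p(t))\le C|s-t|+A$. Bounded geometry: for every $r>0$ closed balls of radius $r$ have uniformly bounded cardinality. Coarse entropy $h_\infty(X)=\lim_{\delta\to\infty}\lim_{R\to\infty}\limsup_{n\to\infty}\frac1n\log s(n,R,\delta,x_0)$, where $s(n,R,\delta,x_0)$ is the supremum of cardinalities of $R$-separated sets of $\delta$-paths $(x_0,\dots,x_n)$ ($d(x_i,x_{i+1})\le\delta$) starting at $x_0$, paths compared by $\max_i d(x_i,y_i)$. *)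

(* Defs.v *)
From HB Require Import structures.
From mathcomp Require Import all_boot all_order all_algebra.
From mathcomp Require Import all_classical all_reals all_analysis.
Set Implicit Arguments. Unset Strict Implicit. Unset Printing Implicit Defensive.
Import Order.TTheory GRing.Theory Num.Theory.
Import numFieldNormedType.Exports.
Local Open Scope classical_set_scope.
Local Open Scope ring_scope.

Section Defs.
Variables (R : realType) (X : Type) (d : X -> X -> R).

Definition is_metric : Prop :=
  (forall x y, 0 <= d x y) /\ (forall x y, d x y = 0 <-> x = y) /\
  (forall x y, d x y = d y x) /\ (forall x y z, d x z <= d x y + d y z).

Definition cball (y : X) (l : R) : set X := [set z | d y z <= l].

Definition ecard (A : set X) : \bar R :=
  ereal_sup [set (k%:R)%:E | k in
     [set k : nat | exists f : 'I_k -> X, injective f /\ (forall i, A (f i))]].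

Definition max_ball_card (l : R) : \bar R :=
  ereal_sup [set ecard (cball y l) | y in [set: X]].

Definition bounded_geometry : Prop :=
  forall r : R, exists N : nat, forall y, (ecard (cball y r) <= (N%:R)%:E)%E.

Definition quasigeodesic : Prop :=
  exists (C A : R), 1 <= C /\ 0 <= A /\
    forall x x' : X, exists p : R -> X,
      p 0 = x /\ p (d x x') = x' /\
      forall s t, 0 <= s <= d x x' -> 0 <= t <= d x x' ->
        C^-1 * `|s - t| - A <= d (p s) (p t) <= C * `|s - t| + A.

Definition delta_path (n : nat) (delta : R) (x0 : X) (p : 'I_n.+1 -> X) : Prop :=
  p ord0 = x0 /\ forall i : 'I_n.+1, forall (Hi : (i.+1 < n.+1)%N),
      d (p i) (p (Ordinal Hi)) <= delta.

Definition path_dist (n : nat) (p q : 'I_n.+1 -> X) : R :=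
  \big[Num.max/0]_(i < n.+1) d (p i) (q i).

(* s(n,R,delta,x0): sup of cardinalities of Rs-separated sets of delta-paths
   of length n starting at x0 (a set of k paths is given as k pairwise
   distinct, pairwise Rs-separated paths) *)
Definition sep_count (n : nat) (Rs delta : R) (x0 : X) : \bar R :=
  ereal_sup [set (k%:R)%:E | k in
    [set k : nat | exists P : 'I_k -> ('I_n.+1 -> X),
       (forall i, delta_path delta x0 (P i)) /\
       (forall i j, i != j -> P i <> P j /\ Rs <= path_dist (P i) (P j))]].

Definition elog_over (n : nat) (s : \bar R) : \bar R :=
  match s with
  | EFin r => (ln r / n%:R)%:E
  | +oo%E => +oo%E
  | -oo%E => -oo%E
  end.

Definition coarse_entropy (x0 : X) : \bar R :=
  lim ((fun delta : R =>
     lim ((fun Rs : R =>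
        limn_esup (fun n => elog_over n (sep_count n Rs delta x0)))
        Rs @[Rs --> +oo]))
     delta @[delta --> +oo]).

Definition ball_growth (l : R) : \bar R :=
  match max_ball_card l with
  | EFin r => (ln r / l)%:E
  | +oo%E => +oo%E
  | -oo%E => -oo%E
  end.

End Defs.

(* Main.v *)
Require Import Defs.
From HB Require Import structures.
From mathcomp Require Import all_boot all_order all_algebra.
From mathcomp Require Import all_classical all_reals all_analysis.
From mathcomp Require Import ring lra zify.
Import Order.TTheory GRing.Theory Num.Theory.
Import numFieldNormedType.Exports.
Local Open Scope classical_set_scope.
Local Open Scope ring_scope.
Set Implicit Arguments. Unset Strict Implicit. Unset Printing Implicit Defensive.
Local Notation truncn := Num.truncn.
Section Basics.
Variables (R : realType) (X : Type) (d : X -> X -> R).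
Hypothesis dm : is_metric d.

Lemma d_ge0 x y : 0 <= d x y. Proof. by case: dm. Qed.
Lemma d_xx x : d x x = 0. Proof. by case: dm => _ [H _]; apply/H. Qed.
Lemma d_sym x y : d x y = d y x. Proof. by case: dm => _ [_ [H _]]. Qed.
Lemma d_tri x y z : d x z <= d x y + d y z. Proof. by case: dm => _ [_ [_ H]]. Qed.

Lemma ecard_le (A : set X) (b : R) (I : finType) (S : {set I}) (f : I -> X) :
  (ecard R A <= b%:E)%E -> {in S &, injective f} -> (forall i, i \in S -> A (f i)) ->
  (#|S|%:R <= b).
Proof.
move=> Ab finj fA; rewrite -lee_fin; apply: le_trans Ab.
apply: ereal_sup_ubound; exists #|S| => //.
exists (fun i => f (enum_val i)); split.
  move=> i j /finj h; apply: enum_val_inj; apply: h; exact: enum_valP.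
by move=> i; apply: fA; exact: enum_valP.
Qed.

Lemma ecard_gt (A : set X) (a : R) : (a%:E < ecard R A)%E ->
  exists k (f : 'I_k -> X), [/\ injective f, (forall i, A (f i)) & a < k%:R].
Proof.
move=> /ereal_sup_gt [_ [k [f [fi fA]] <-]]; rewrite lte_fin => ak.
by exists k, f.
Qed.

End Basics.
Section SepCount.
Variables (R : realType) (X : Type) (d : X -> X -> R).
Hypothesis dm : is_metric d.
Local Open Scope ereal_scope.

Lemma sep_count_ub n Rs delta x0 (b : R) :
  (forall k (P : 'I_k -> 'I_n.+1 -> X), (forall i, delta_path d delta x0 (P i)) ->
    (forall i j, i != j -> P i <> P j /\ (Rs <= path_dist d (P i) (P j))%R) ->
    (k%:R <= b)%R) ->
  sep_count d n Rs delta x0 <= b%:E.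
Proof.
move=> H; apply: ge_ereal_sup => _ [k [P [P1 P2]] <-].
by rewrite lee_fin; exact: H P1 P2.
Qed.

Lemma sep_count_lb n Rs delta x0 (I : finType) (P : I -> 'I_n.+1 -> X) :
  (forall i, delta_path d delta x0 (P i)) ->
  (forall i j, i != j -> P i <> P j /\ (Rs <= path_dist d (P i) (P j))%R) ->
  (#|I|%:R)%:E <= sep_count d n Rs delta x0.
Proof.
move=> P1 P2; apply: ereal_sup_ubound; exists #|I| => //.
exists (fun i => P (enum_val i)); split => [i|i j ij]; first exact: P1.
apply: P2; apply: contra ij => /eqP /enum_val_inj ->; exact: eqxx.
Qed.

Lemma sep_count_ge1 n Rs delta x0 : (0 <= delta)%R -> 1 <= sep_count d n Rs delta x0.
Proof.
move=> d0; have := @sep_count_lb n Rs delta x0 unit (fun _ _ => x0).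
rewrite card_unit; apply => [i|[] [] //].
by split => // j Hj; rewrite d_xx.
Qed.

Lemma sep_count_mono n Rs1 Rs2 delta x0 : (Rs1 <= Rs2)%R ->
  sep_count d n Rs2 delta x0 <= sep_count d n Rs1 delta x0.
Proof.
move=> r12; apply: ereal_sup_le => _ [k [P [P1 P2]] <-]; exists k => //.
exists P; split => // i j /P2 [H1 H2]; split => //; exact: le_trans H2.
Qed.

Lemma limn_esup_ub (u : nat -> \bar R) b : (forall n, u n <= b) -> limn_esup u <= b.
Proof.
move=> ub; rewrite /limn_esup limf_esupE; apply: ge_ereal_inf.
exists (ereal_sup (u @` setT)); first by exists setT => //; exact: filterT.
by apply: ge_ereal_sup => _ [n _ <-].
Qed.

Lemma limn_esup_lb (u : nat -> \bar R) b N : (forall n, (N <= n)%N -> b <= u n) ->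
  b <= limn_esup u.
Proof.
move=> lb; rewrite /limn_esup limf_esupE; apply: le_ereal_inf_tmp => _ [V HV <-].
have [M _ HM] := HV.
apply: le_ereal_sup_tmp; exists (u (maxn M N)).
  by exists (maxn M N) => //; apply: HM; rewrite /= leq_maxl.
by apply: lb; rewrite leq_maxr.
Qed.

End SepCount.
Section Coding.
Variables (X : Type).

Lemma code_exists (A : set X) (K : nat) (a : X) : A a ->
  (forall k (f : 'I_k -> X), injective f -> (forall i, A (f i)) -> (k <= K)%N) ->
  exists c : X -> 'I_K, forall x y, A x -> A y -> c x = c y -> x = y.
Proof.
move=> Aa HK.
have K0 : (0 < K)%N by apply: (HK 1 (fun _ => a)) => // [[[|//] ?] [[|//] ?]] _; exact: val_inj.
pose P := fun n => `[< exists f : 'I_n -> X, injective f /\ forall i, A (f i) >].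
have P0 : exists n, P n.
  exists 0%N; apply/asboolP; exists (fun i => a); split => [[]|[]] //.
have Pub : forall n, P n -> (n <= K)%N by move=> n /asboolP [f [fi fA]]; exact: HK fi fA.
case: (ex_maxnP P0 Pub) => n /asboolP [f [fi fA]] nmax.
have nK : (n <= K)%N by apply: Pub; apply/asboolP; exists f.
have cov : forall x, A x -> exists i, f i = x.
  move=> x Ax; apply: contrapT => nex.
  pose g := fun i : 'I_n.+1 => if unlift ord_max i is Some j then f j else x.
  suff : (n.+1 <= n)%N by rewrite ltnn.
  apply: nmax; apply/asboolP; exists g; split.
    move=> i i'; rewrite /g.
    case: (unliftP ord_max i) => [j ->|->]; case: (unliftP ord_max i') => [j' ->|->] //.
    - by move=> /fi ->.
    - by move=> fj; exfalso; apply: nex; exists j.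
    - by move=> fj; exfalso; apply: nex; exists j'.
  move=> i; rewrite /g; case: (unliftP ord_max i) => [j _|_] //.
pose c := fun x => match pselect (exists i, f i = x) with
  | left e => widen_ord nK (projT1 (cid e)) | right _ => Ordinal K0 end.
exists c => x y Ax Ay; rewrite /c.
case: pselect => [ex|]; last by move=> nx; exfalso; apply: nx; exact: cov.
case: pselect => [ey|]; last by move=> ny; exfalso; apply: ny; exact: cov.
case: (cid ex) => i fi_x; case: (cid ey) => j fj_y /= /(congr1 val) /= ij.
by rewrite -fi_x -fj_y; congr f; exact: val_inj.
Qed.

End Coding.
Section Skeleton.
Variables (R : realType) (X : Type) (d : X -> X -> R).
Hypothesis dm : is_metric d.

Lemma skeleton_count (rho : R) (K : nat) (x0 : X) : 0 <= rho ->
  (forall y k (f : 'I_k -> X), injective f -> (forall i, cball d y rho (f i)) -> (k <= K)%N) ->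
  forall J (I : finType) (F : I -> nat -> X), (forall i, F i 0%N = x0) ->
  (forall i j, (j < J)%N -> d (F i j) (F i j.+1) <= rho) ->
  (forall i i', (forall j, (j <= J)%N -> F i j = F i' j) -> i = i') ->
  (#|I| <= K ^ J)%N.
Proof.
move=> rho0 HK J I F F0 Fst Finj.
have /choice [code Hcode] : forall y, exists c : X -> 'I_K,
    forall x z, cball d y rho x -> cball d y rho z -> c x = c z -> x = z.
  move=> y; apply: (code_exists (a := y)); last exact: HK.
  by rewrite /cball /= (d_xx dm).
pose phi := fun i => [ffun j : 'I_J => code (F i j) (F i j.+1)].
rewrite -(card_ord K) -(card_ord J) -card_ffun; apply: (@leq_card _ _ phi).
move=> i i' /= eqphi; apply: Finj; elim => [|j IH] jJ; first by rewrite !F0.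
have jJ' : (j < J)%N by [].
have := congr1 (fun g : {ffun 'I_J -> 'I_K} => g (Ordinal jJ')) eqphi.
rewrite /phi !ffunE /= => ec.
have eqj : F i j = F i' j by apply: IH; exact: ltnW.
rewrite eqj in ec.
have H1 : cball d (F i' j) rho (F i j.+1) by rewrite /cball /= -eqj; exact: Fst.
have H2 : cball d (F i' j) rho (F i' j.+1) by rewrite /cball /=; exact: Fst.
exact: (Hcode _ _ _ H1 H2 ec).
Qed.

End Skeleton.
Section Paths.
Variables (R : realType) (X : Type) (d : X -> X -> R).
Hypothesis dm : is_metric d.

Lemma path_dist_le n (p q : 'I_n.+1 -> X) b : 0 <= b ->
  (forall i, d (p i) (q i) <= b) -> path_dist d p q <= b.
Proof. by move=> b0 H; apply: bigmax_le => // i _; exact: H. Qed.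

Lemma path_dist_ge n (p q : 'I_n.+1 -> X) i : d (p i) (q i) <= path_dist d p q.
Proof. rewrite /path_dist; apply: le_bigmax. Qed.

Lemma path_dist_xx n (p : 'I_n.+1 -> X) : path_dist d p p = 0.
Proof.
apply/le_anti; rewrite path_dist_le //=; last by move=> i; rewrite (d_xx dm).
by apply: le_trans (path_dist_ge p p ord0); rewrite (d_xx dm).
Qed.

Lemma path_step n delta x0 (p : 'I_n.+1 -> X) : delta_path d delta x0 p ->
  forall a b, (a <= b)%N -> (b <= n)%N ->
  d (p (inord a)) (p (inord b)) <= (b - a)%:R * delta.
Proof.
move=> [_ Hst] a; elim => [|b IH] ab bn.
  by move: ab; rewrite leqn0 => /eqP ->; rewrite (d_xx dm) mul0r.
move: ab; rewrite leq_eqVlt => /orP [/eqP ->|ab]; first by rewrite subnn mul0r (d_xx dm).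
have bn' : (b < n.+1)%N by apply: leq_trans bn _.
have Hi : ((inord b : 'I_n.+1).+1 < n.+1)%N by rewrite inordK.
have e : (Ordinal Hi) = inord b.+1 by apply: val_inj; rewrite /= !inordK.
apply: le_trans (d_tri dm _ (p (inord b)) _) _.
rewrite subSn // mulrSr mulrDl mul1r lerD //; first by apply: IH => //; exact: ltnW.
by rewrite -e; exact: Hst.
Qed.

End Paths.
Section PartI.
Variables (R : realType) (X : Type) (d : X -> X -> R).
Hypothesis dm : is_metric d.

Lemma sep_bound_i n Rs delta x0 (m K : nat) : 0 <= delta -> (0 < m)%N ->
  2 * (m%:R * delta) < Rs ->
  (forall y k (f : 'I_k -> X), injective f -> (forall i, cball d y (m%:R * delta) (f i)) -> (k <= K)%N) ->
  (sep_count d n Rs delta x0 <= ((K ^ (n %/ m))%:R)%:E)%E.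
Proof.
move=> d0 m0 mR HK; apply: sep_count_ub => k P P1 P2.
rewrite ler_nat -[k]card_ord.
apply: (@skeleton_count R X d dm (m%:R * delta) K x0 _ _ (n %/ m) _ (fun i j => P i (inord (j * m)))).
- by rewrite mulr_ge0.
- exact: HK.
- move=> i /=; have -> : (inord (0 * m) : 'I_n.+1) = ord0 by apply: val_inj; rewrite /= inordK.
  by case: (P1 i).
- move=> i j jJ /=.
  have b_n : (j.+1 * m <= n)%N.
    apply: leq_trans (leq_trunc_div n m); rewrite leq_mul2r; apply/orP; right; exact: jJ.
  have := path_step dm (P1 i) (a := j * m) (b := j.+1 * m).
  rewrite mulSn addnK; apply => //.
  exact: leq_addl.
- move=> i i' Heq; apply/eqP; apply: contraT => ii'.
  have [_ H] := P2 _ _ ii'; suff : path_dist d (P i) (P i') < Rs by rewrite ltNge H.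
  apply: le_lt_trans mR; apply: path_dist_le; first by rewrite !mulr_ge0.
  move=> t; set a := (t %/ m * m)%N.
  have at_ : (a <= t)%N by exact: leq_trunc_div.
  have tn : (t <= n)%N by rewrite -ltnS.
  have ta : (t - a < m)%N by rewrite /a {1}(divn_eq t m) addKn ltn_pmod.
  have ja : (t %/ m <= n %/ m)%N by apply: leq_div2r.
  have E := Heq _ ja; rewrite /= -/a in E.
  have B1 := path_step dm (P1 i) at_ tn; have B2 := path_step dm (P1 i') at_ tn.
  rewrite inord_val in B1 B2.
  apply: le_trans (d_tri dm _ (P i (inord a)) _) _.
  rewrite (d_sym dm) {2}E mulr2n mulrDl mul1r; apply: lerD.
    apply: le_trans B1 _; apply: ler_wpM2r => //; rewrite ler_nat; exact: ltnW.
  apply: le_trans B2 _; apply: ler_wpM2r => //; rewrite ler_nat; exact: ltnW.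
Qed.

End PartI.
Section PartIb.
Variables (R : realType) (X : Type) (d : X -> X -> R).
Hypothesis dm : is_metric d.

Lemma elog_le (s r : R) (J m n : nat) : 1 <= s -> s <= r ^+ J -> 1 <= r ->
  (J * m <= n)%N -> (0 < m)%N -> ln s / n%:R <= ln r / m%:R.
Proof.
move=> s1 sr r1 Jmn m0.
have lr0 : 0 <= ln r := ln_ge0 r1.
have rm0 : 0 <= ln r / m%:R by rewrite divr_ge0.
case: n Jmn => [|n] Jmn; first by rewrite invr0 mulr0.
have r0 : 0 < r by exact: lt_le_trans ltr01 r1.
have s0 : 0 < s by exact: lt_le_trans ltr01 s1.
apply: (@le_trans _ _ (ln (r ^+ J) / n.+1%:R)).
  by rewrite ler_wpM2r // ?invr_ge0 // ler_ln // posrE exprn_gt0.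
rewrite lnXn // ler_pdivrMr ?ltr0Sn // mulrAC ler_pdivlMr ?ltr0n //.
have -> : ln r *+ J * m%:R = ln r * (J * m)%:R.
  by rewrite natrM mulrA !mulr_natr.
by rewrite ler_wpM2l // ler_nat.
Qed.

Lemma mbc_fin (x0 : X) l : bounded_geometry d -> 0 <= l -> exists r,
  [/\ max_ball_card d l = r%:E, 1 <= r & forall y, (ecard R (cball d y l) <= r%:E)%E].
Proof.
move=> bg l0; case: (bg l) => N HN.
have ub : (max_ball_card d l <= (N%:R)%:E)%E by apply: ge_ereal_sup => _ [y _ <-]; exact: HN.
have lb : (1 <= ecard R (cball d x0 l))%E.
  apply: ereal_sup_ubound; exists 1%N => //; exists (fun _ => x0); split.
    by move=> [[|//] ?] [[|//] ?] _; exact: val_inj.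
  by move=> _; rewrite /cball /= (d_xx dm).
have lb2 : (ecard R (cball d x0 l) <= max_ball_card d l)%E.
  by apply: ereal_sup_ubound; exists x0.
have := le_trans lb lb2; move: ub.
case E : (max_ball_card d l) => [r| |] // _ r1.
exists r; split => // y; rewrite -E; apply: ereal_sup_ubound; by exists y.
Qed.

End PartIb.
Section PartIc.
Variables (R : realType) (X : Type) (d : X -> X -> R).
Hypothesis dm : is_metric d.

Lemma sep_fin n Rs delta x0 (b : R) : 0 <= delta ->
  (sep_count d n Rs delta x0 <= b%:E)%E ->
  exists s, sep_count d n Rs delta x0 = s%:E /\ 1 <= s <= b.
Proof.
move=> d0 ub; have lb := sep_count_ge1 dm n Rs x0 d0; move: ub lb.
by case: (sep_count d n Rs delta x0) => [s| |] // sb s1; exists s; rewrite -!lee_fin sb s1.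
Qed.

Lemma inner_bound_i x0 delta Rs : bounded_geometry d -> 0 < delta -> 8 * delta <= Rs ->
  ((0 <= limn_esup (fun n => elog_over n (sep_count d n Rs delta x0)))%E /\
   (limn_esup (fun n => elog_over n (sep_count d n Rs delta x0))
      <= delta%:E * ball_growth d ((truncn (Rs / (4 * delta)))%:R * delta))%E).
Proof.
move=> bg d0 Rs8.
have d0' : 0 <= delta by exact: ltW.
have Rs0 : 0 < Rs by apply: lt_le_trans Rs8; rewrite mulr_gt0.
set m := truncn (Rs / (4 * delta)).
have q0 : 0 <= Rs / (4 * delta) by apply: divr_ge0; [exact: ltW | rewrite mulr_ge0].
have m2 : (2 <= m)%N.
  rewrite /m truncn_ge_nat // ler_pdivlMr ?mulr_gt0 //.
  by apply: le_trans Rs8; rewrite mulrA -natrM ler_wpM2r.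
have m0 : (0 < m)%N by apply: leq_trans m2.
have mle : m%:R * delta <= Rs / 4.
  have := truncn_le (Rs / (4 * delta)); rewrite q0 -/m => H.
  by rewrite -ler_pdivlMr // (le_trans H) // invfM mulrA mulrAC.
have l0 : 0 <= m%:R * delta by rewrite mulr_ge0.
have [r [Er r1 Hr]] := mbc_fin dm x0 bg l0.
have r0 : 0 <= r by apply: le_trans r1.
set K := truncn r.
have HK : forall y k (f : 'I_k -> X), injective f ->
    (forall i, cball d y (m%:R * delta) (f i)) -> (k <= K)%N.
  move=> y k f fi fA; rewrite /K truncn_ge_nat //.
  have := ecard_le (S := [set: 'I_k]) (Hr y) (fun i j _ _ => @fi i j) (fun i _ => fA i).
  by rewrite cardsT card_ord.
have mR : 2 * (m%:R * delta) < Rs by apply: le_lt_trans (ler_wpM2l _ mle) _; lra.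
split.
  apply: (limn_esup_lb (N := 0%N)) => n _.
  have [s [-> /andP [s1 _]]] := sep_fin d0' (sep_bound_i dm n x0 d0' m0 mR HK).
  by rewrite /elog_over lee_fin divr_ge0 // ln_ge0.
apply: limn_esup_ub => n.
have [s [-> /andP [s1 sb]]] := sep_fin d0' (sep_bound_i dm n x0 d0' m0 mR HK).
rewrite /elog_over /ball_growth Er -EFinM lee_fin.
have -> : delta * (ln r / (m%:R * delta)) = ln r / m%:R.
  field.
  by rewrite pnatr_eq0 -lt0n m0 gt_eqF.
apply: (elog_le (J := (n %/ m)%N)) => //; last exact: leq_trunc_div.
apply: le_trans sb _; rewrite natrX lerXn2r // ?nnegrE ?ler0n //.
by rewrite /K truncn_le.
Qed.

End PartIc.
Section PartIMain.
Variables (R : realType) (X : Type) (d : X -> X -> R).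
Hypothesis dm : is_metric d.

Lemma l_cvgy (delta : R) : 0 < delta ->
  (fun Rs : R => (truncn (Rs / (4 * delta)))%:R * delta) @ +oo --> +oo.
Proof.
move=> d0; apply/cvgryPge => A.
exists (4 * (`|A| + delta)); split; first by rewrite num_real.
move=> Rs /= HRs.
have q0 : 0 <= Rs / (4 * delta).
  apply: divr_ge0; last by rewrite mulr_ge0 // ltW.
  by apply: le_trans (ltW HRs); rewrite mulr_ge0 // addr_ge0 // ltW.
have /andP [_ Ht] := truncn_itv q0.
have H1 : Rs / (4 * delta) - 1 <= (truncn (Rs / (4 * delta)))%:R.
  by rewrite lerBlDr natr1; exact: ltW.
apply: le_trans (ler_wpM2r (ltW d0) H1).
have -> : (Rs / (4 * delta) - 1) * delta = Rs / 4 - delta.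
  by field; rewrite gt_eqF.
have : A <= `|A| by exact: ler_norm.
lra.
Qed.

Lemma inner_cvg_i x0 delta : bounded_geometry d ->
  (ball_growth d l @[l --> +oo] --> 0%E) -> 0 < delta ->
  (fun Rs => limn_esup (fun n => elog_over n (sep_count d n Rs delta x0))) @ +oo --> 0%E.
Proof.
move=> bg bg0 d0.
apply: (@squeeze_cvge _ _ _ _ (fun _ => 0%E) _
   (fun Rs => delta%:E * ball_growth d ((truncn (Rs / (4 * delta)))%:R * delta))%E).
- exists (8 * delta); split; first by rewrite num_real.
  move=> Rs /ltW H; have [H1 H2] := inner_bound_i dm x0 bg d0 H.
  by rewrite H1 H2.
- exact: cvg_cst.
- rewrite -(mule0 delta%:E); apply: cvgeZl => //.
  exact: (cvg_comp _ _ (l_cvgy d0) bg0).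
Qed.

Lemma part_i : bounded_geometry d -> (ball_growth d l @[l --> +oo] --> 0%E) ->
  forall x0 : X, coarse_entropy d x0 = 0%E.
Proof.
move=> bg bg0 x0; rewrite /coarse_entropy; apply: cvg_lim => //.
apply: cvg_near_cst; exists 0; split; first by rewrite num_real.
move=> delta /= d0; apply: cvg_lim => //.
exact: inner_cvg_i.
Qed.

End PartIMain.
Section Blocks.
Variables (R : realType) (X : Type) (d : X -> X -> R).
Variables (delta : R) (q : X -> X -> nat -> X) (m : nat) (B : set X).
Hypothesis Q0 : forall a b, q a b 0 = a.
Hypothesis Qs : forall a b t, d (q a b t) (q a b t.+1) <= delta.
Hypothesis Qe : forall a b, B a -> B b -> q a b m = b.
Hypothesis m0 : (0 < m)%N.

Definition Gq (a : nat -> X) (u : nat) := q (a (u %/ m)%N) (a (u %/ m)%N.+1) (u %% m)%N.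

Lemma G_at a i : Gq a (i * m) = a i.
Proof. by rewrite /Gq mulnK // modnMl Q0. Qed.

Lemma G_step a : (forall i, B (a i)) -> forall u, d (Gq a u) (Gq a u.+1) <= delta.
Proof.
move=> Ha u; rewrite /Gq.
have Hu := divn_eq u m; set i := (u %/ m)%N in Hu *; set r := (u %% m)%N in Hu *.
have rm : (r < m)%N by rewrite ltn_pmod.
have -> : u.+1 = (i * m + r.+1)%N by rewrite Hu addnS.
move: rm; rewrite leq_eqVlt => /orP [/eqP rm|rm].
  rewrite rm -mulSnr mulnK // modnMl Q0.
  by rewrite -{2}(Qe (Ha i) (Ha i.+1)) -rm; exact: Qs.
rewrite divnMDl // modnMDl divn_small // modn_small // addn0; exact: Qs.
Qed.

End Blocks.
Section BlockCount.
Variables (R : realType) (X : Type) (d : X -> X -> R).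
Hypothesis dm : is_metric d.
Variables (delta : R) (q : X -> X -> nat -> X) (m : nat) (B : set X).
Hypothesis Q0 : forall a b, q a b 0 = a.
Hypothesis Qs : forall a b t, d (q a b t) (q a b t.+1) <= delta.
Hypothesis Qe : forall a b, B a -> B b -> q a b m = b.
Hypothesis m0 : (0 < m)%N.
Variables (x0 y : X) (L k : nat) (w : 'I_k -> X) (S : {set 'I_k}) (Rs : R).
Hypothesis By : B y.
Hypothesis Bw : forall i, B (w i).
Hypothesis QL : q x0 y L = y.
Hypothesis Ssep : forall i j, i \in S -> j \in S -> i != j -> Rs <= d (w i) (w j).
Hypothesis Rs0 : 0 < Rs.

Lemma block_count n : (L <= n)%N ->
  (((#|S| ^ ((n - L) %/ m))%:R)%:E <= sep_count d n Rs delta x0)%E.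
Proof.
move=> Ln; set j := ((n - L) %/ m)%N.
pose T := {ffun 'I_j -> {s : 'I_k | s \in S}}.
pose A (f : T) (i : nat) : X := if i == 0%N then y else
  match (insub (minn i j).-1 : option 'I_j) with Some o => w (val (f o)) | None => y end.
have HA : forall f i, B (A f i).
  by move=> f i; rewrite /A; case: (i == 0%N) => //; case: insub.
have HAo : forall f (o : 'I_j), A f o.+1 = w (val (f o)).
  move=> f o; rewrite /A /=.
  have -> : (minn o.+1 j).-1 = o by rewrite (minn_idPl (ltn_ord o)).
  by rewrite valK.
pose P' (f : T) (t : nat) := if (t <= L)%N then q x0 y t else Gq q m (A f) (t - L).
have HP' : forall f t, (L <= t)%N -> P' f t = Gq q m (A f) (t - L).
  move=> f t Lt; rewrite /P'; case: leqP => // tL.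
  have -> : t = L by apply/eqP; rewrite eqn_leq tL Lt.
  rewrite subnn QL; have := G_at Q0 m0 (A f) 0; rewrite mul0n => ->.
  by rewrite /A eqxx.
pose P (f : T) (t : 'I_n.+1) := P' f t.
have -> : #|S| = #|{: {s : 'I_k | s \in S}}| by rewrite card_sig.
have -> : (#|{: {s : 'I_k | s \in S}}| ^ j)%N = #|{: T}|.
  by rewrite card_ffun card_ord.
apply: (sep_count_lb (P := P)).
  move=> f; split; first by rewrite /P /P' /= Q0.
  move=> t Ht /=; rewrite /P /=.
  case: (leqP t.+1 L) => h.
    by rewrite /P' h (ltnW h); exact: Qs.
  rewrite !HP' // ?(ltnW h) // subSn //.
  exact: (G_step Q0 Qs Qe m0 (HA f)).
move=> f g fg.
have [oo ho] : exists oo, f oo != g oo.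
  apply/existsP; move: fg; apply: contraR; rewrite negb_exists => /forallP H.
  by apply/eqP/ffunP => oo; apply/eqP/negPn/H.
set t := (L + oo.+1 * m)%N.
have tn : (t < n.+1)%N.
  rewrite ltnS /t -(subnKC Ln) leq_add2l.
  apply: leq_trans (leq_trunc_div (n - L) m); rewrite leq_mul2r; apply/orP; right.
  exact: ltn_ord.
have Pt : forall h : T, P h (Ordinal tn) = w (val (h oo)).
  move=> h; rewrite /P /= HP' /t ?leq_addr // addKn.
  by rewrite (G_at Q0 m0) HAo.
have sep : Rs <= path_dist d (P f) (P g).
  apply: le_trans (path_dist_ge _ _ _ (Ordinal tn)); rewrite !Pt.
  apply: Ssep; try exact: valP.
  by apply: contra ho => /eqP /val_inj ->.
split => // Efg; move: sep; rewrite Efg (path_dist_xx dm) => H.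
by move: (lt_le_trans Rs0 H); rewrite ltxx.
Qed.

End BlockCount.
Section SepSubset.
Variables (R : realType) (X : Type) (d : X -> X -> R).
Hypothesis dm : is_metric d.

Lemma sep_subset k (w : 'I_k -> X) Rs (N : nat) : 0 < Rs -> injective w ->
  (forall z, (ecard R (cball d z Rs) <= (N%:R)%:E)%E) ->
  exists S : {set 'I_k}, (forall i j, i \in S -> j \in S -> i != j -> Rs <= d (w i) (w j))
     /\ (k <= #|S| * N)%N.
Proof.
move=> Rs0 winj HN.
pose sepb (S : {set 'I_k}) := [forall i in S, [forall j in S, (i != j) ==> (Rs <= d (w i) (w j))]].
have s0 : sepb finset.set0 by apply/forall_inP => i; rewrite finset.in_set0.
have [S sS Smax] := @arg_maxnP _ finset.set0 sepb (fun S => #|S|) s0.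
have sepS : forall i j, i \in S -> j \in S -> i != j -> Rs <= d (w i) (w j).
  by move=> i j iS jS ij; move/forall_inP/(_ i iS)/forall_inP/(_ j jS)/implyP: sS; apply.
exists S; split => //.
have near : forall i, exists s, s \in S /\ d (w s) (w i) < Rs.
  move=> i; case: (boolP (i \in S)) => iS; first by exists i; rewrite (d_xx dm).
  apply: contrapT => H.
  have : sepb (i |: S).
    apply/forall_inP => a; rewrite in_setU1 => /orP [/eqP ->|aS];
      apply/forall_inP => b; rewrite in_setU1 => /orP [/eqP ->|bS]; apply/implyP => ab.
    - by rewrite eqxx in ab.
    - rewrite (d_sym dm) leNgt; apply/negP => lt; apply: H; exists b; split => //.
    - rewrite leNgt; apply/negP => lt; apply: H; exists a; split => //.
    - exact: sepS.
  move/Smax; rewrite cardsU1 iS /= add1n ltnn //.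
have [phi Hphi] := choice near.
apply: (@leq_trans (\sum_(i : 'I_k) 1)%N); first by rewrite sum1_card card_ord.
rewrite (partition_big phi (mem S)) /=; last first.
  by move=> i _; case: (Hphi i).
rewrite -sum_nat_const; apply: leq_sum => s sS'.
rewrite sum1dep_card.
rewrite -(ler_nat R); apply: (ecard_le (A := cball d (w s) Rs) (HN (w s))).
  by move=> a b _ _; exact: winj.
move=> i; rewrite inE => /eqP <-; rewrite /cball /=; apply: ltW; by case: (Hphi i).
Qed.

End SepSubset.
Section QDisc.
Variables (R : realType) (X : Type) (d : X -> X -> R).
Hypothesis dm : is_metric d.
Variables (Pq : X -> X -> R -> X) (C A s : R).
Hypothesis HP : forall x x', Pq x x' 0 = x /\ Pq x x' (d x x') = x' /\
  forall u v, 0 <= u <= d x x' -> 0 <= v <= d x x' -> d (Pq x x' u) (Pq x x' v) <= C * `|u - v| + A.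
Hypothesis C0 : 0 <= C.
Hypothesis s0 : 0 <= s.

Definition qq a b (t : nat) := Pq a b (Num.min (t%:R * s) (d a b)).

Lemma qq_0 a b : qq a b 0 = a.
Proof. by rewrite /qq mul0r min_l ?(d_ge0 dm) //; case: (HP a b). Qed.

Lemma qq_end a b t : d a b <= t%:R * s -> qq a b t = b.
Proof. by move=> h; rewrite /qq min_r //; case: (HP a b) => _ []. Qed.

Lemma qq_step a b t : d (qq a b t) (qq a b t.+1) <= C * s + A.
Proof.
case: (HP a b) => _ [_ H]; rewrite /qq.
have D0 := d_ge0 dm a b; set D := d a b in H D0 *.
have ts0 : 0 <= t%:R * s by rewrite mulr_ge0.
have e : t.+1%:R * s = t%:R * s + s by rewrite -natr1 mulrDl mul1r.
apply: le_trans (H _ _ _ _) _.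
- by rewrite le_min ts0 D0 ge_min lexx orbT.
- by rewrite le_min e D0 ge_min lexx orbT addr_ge0.
- rewrite lerD2r ler_wpM2l //.
  rewrite /Num.min e; case: ifP => h1; case: ifP => h2.
  + by rewrite opprD addrA subrr add0r normrN ger0_norm.
  + rewrite ltr0_norm ?subr_lt0 //.
    move: h2; rewrite ltNge => /negbFE h2; lra.
  + move: h1 h2; rewrite ltNge => /negbFE h1 h2.
    have h3 : t%:R * s <= t%:R * s + s by rewrite lerDl.
    by move: (le_lt_trans (le_trans h1 h3) h2); rewrite ltxx.
  + by rewrite subrr normr0.
Qed.

End QDisc.
Lemma arith_ii (R : realType) (c s l lnS n j m : R) : 0 < c -> 0 < s -> 0 < l -> 0 < n -> 0 <= j ->
  c * l / 2 <= lnS -> m * s <= 3 * l -> n <= 2 * (j * m) -> c * s / 12 <= j * lnS / n.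
Proof.
move=> c0 s0 l0 n0 j0 h1 h2 h3.
rewrite ler_pdivlMr //.
have e1 : c * s / 12 * n <= c * s / 12 * (2 * (j * m)) by rewrite ler_wpM2l // divr_ge0 // mulr_ge0 // ltW.
apply: le_trans e1 _.
have -> : c * s / 12 * (2 * (j * m)) = (c * j / 6) * (m * s) by field.
have e2 : (c * j / 6) * (m * s) <= (c * j / 6) * (3 * l) by rewrite ler_wpM2l // divr_ge0 // mulr_ge0 // ltW.
apply: le_trans e2 _.
have -> : c * j / 6 * (3 * l) = j * (c * l / 2) by field.
by rewrite ler_wpM2l.
Qed.

Lemma extract_c (R : realType) (X : Type) (d : X -> X -> R) :
  (0 < limf_esup (ball_growth d) (pinfty_nbhs R))%E ->
  exists c : R, 0 < c /\ forall L0, exists l, L0 < l /\ (c%:E < ball_growth d l)%E.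
Proof.
move=> H.
have [c [c0 cv]] : exists c : R, 0 < c /\ (c%:E < limf_esup (ball_growth d) (pinfty_nbhs R))%E.
  move: H; case: (limf_esup _ _) => [r| |] //; rewrite ?lte_fin => r0.
    by exists (r / 2); rewrite lte_fin; split; lra.
  by exists 1; split => //; rewrite ltry.
exists c; split => // L0.
have V : pinfty_nbhs R [set l | (L0 < l)%R] by exists L0; split; [rewrite num_real | ].
have : (c%:E < ereal_sup (ball_growth d @` [set l | (L0 < l)%R]))%E.
  apply: lt_le_trans cv _; apply: ereal_inf_lbound; by exists [set l | (L0 < l)%R].
by move=> /ereal_sup_gt [_ [l Hl <-] cl]; exists l.
Qed.

Lemma nat_ii (n L m j r : nat) : (n - L = j * m + r)%N -> (r < m)%N -> (2 * (L + m) <= n)%N ->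
  (n <= 2 * (j * m))%N.
Proof. move=> h1 h2 h3; lia. Qed.
Lemma nat_ii2 (n L m : nat) : (2 * (L + m) <= n)%N -> (0 < m)%N -> (L <= n)%N /\ (0 < n)%N.
Proof. move=> h1 h2; split; lia. Qed.

Section PartII.
Variables (R : realType) (X : Type) (d : X -> X -> R).
Hypothesis dm : is_metric d.

Lemma inner_lb_ii (x0 : X) (Pq : X -> X -> R -> X) (C A c delta Rs : R) :
  (forall x x', Pq x x' 0 = x /\ Pq x x' (d x x') = x' /\
    forall u v, 0 <= u <= d x x' -> 0 <= v <= d x x' -> d (Pq x x' u) (Pq x x' v) <= C * `|u - v| + A) ->
  1 <= C -> 0 <= A -> bounded_geometry d -> 0 < c ->
  (forall L0, exists l, L0 < l /\ (c%:E < ball_growth d l)%E) -> A < delta -> 0 < Rs ->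
  ((c * ((delta - A) / C) / 12)%:E <=
     limn_esup (fun n => elog_over n (sep_count d n Rs delta x0)))%E.
Proof.
move=> HP C1 A0 bg c0 Hc dA Rs0.
have C0 : 0 < C by apply: lt_le_trans C1.
set s := (delta - A) / C.
have s0 : 0 < s by rewrite /s divr_gt0 // subr_gt0.
have edelta : C * s + A = delta by rewrite /s; field; rewrite gt_eqF.
case: (bg Rs) => N HN.
have [l [Ll cl]] := Hc (s + `|2 * ln N%:R / c|).
have nrm0 : 0 <= `|2 * ln N%:R / c| by [].
have l_s : s <= l by apply: ltW; apply: le_lt_trans Ll; rewrite lerDl.
have l0 : 0 < l by apply: lt_le_trans l_s.
have lN : 2 * ln N%:R / c <= l.
  apply: le_trans (ltW Ll); apply: le_trans (ler_norm _) _; rewrite lerDr; exact: ltW.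
have [r [Er r1 Hr]] := mbc_fin dm x0 bg (ltW l0).
move: cl; rewrite /ball_growth Er lte_fin => cl.
have clr : c * l < ln r by rewrite -ltr_pdivlMr.
have r0 : 0 < r by apply: lt_le_trans r1.
have er : expR (c * l) < r by rewrite -ltr_ln ?posrE ?expR_gt0 // expRK.
have : ((expR (c * l))%:E < max_ball_card d l)%E by rewrite Er lte_fin.
move=> /ereal_sup_gt [_ [y _ <-]] ey.
have [k [w [winj wB ek]]] := ecard_gt ey.
have [S [Ssep kS]] := sep_subset dm Rs0 winj HN.
have k1 : (1 <= k)%N by rewrite -(ler_nat R); apply: le_trans (ltW ek); rewrite -expR0 ler_expR; apply: mulr_ge0; exact: ltW.
have S1 : (0 < #|S|)%N by rewrite lt0n; apply/eqP => S0; move: kS; rewrite S0 mul0n leqn0 => /eqP k0; move: k1; rewrite k0.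
have N1 : (0 < N)%N by rewrite lt0n; apply/eqP => N0; move: kS; rewrite N0 muln0 leqn0 => /eqP k0; move: k1; rewrite k0.
set m := (truncn (2 * l / s)).+1.
set L := (truncn (d x0 y / s)).+1.
have m0 : (0 < m)%N by [].
have q2 : 0 <= 2 * l / s by apply: divr_ge0; [rewrite mulr_ge0 // ltW | exact: ltW].
have ms : 2 * l <= m%:R * s.
  have /andP [_ h] := truncn_itv q2; rewrite -ler_pdivrMr //; exact: ltW.
have ms3 : m%:R * s <= 3 * l.
  have h := truncn_le (2 * l / s); rewrite q2 in h.
  rewrite /m -natr1 mulrDl mul1r.
  have : (truncn (2 * l / s))%:R * s <= 2 * l by rewrite -ler_pdivlMr.
  lra.
have Ls : d x0 y <= L%:R * s.
  have q3 : 0 <= d x0 y / s by apply: divr_ge0; [exact: (d_ge0 dm) | exact: ltW].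
  have /andP [_ h] := truncn_itv q3; rewrite -ler_pdivrMr //; exact: ltW.
pose q := qq d Pq s.
have Q0 : forall a b, q a b 0 = a by move=> a b; exact: (qq_0 dm s HP).
have Qs : forall a b t, d (q a b t) (q a b t.+1) <= delta.
  by move=> a b t; rewrite -edelta; exact: (qq_step dm HP (ltW C0) (ltW s0)).
have Qe : forall a b, cball d y l a -> cball d y l b -> q a b m = b.
  move=> a b ha hb; apply: (qq_end HP); apply: le_trans ms.
  apply: le_trans (d_tri dm a y b) _; rewrite (d_sym dm a y).
  rewrite /cball /= in ha hb; lra.
have QL : q x0 y L = y by apply: (qq_end HP).
have By : cball d y l y by rewrite /cball /= (d_xx dm) ltW.
have BC := @block_count R X d dm delta q m (cball d y l) Q0 Qs Qe m0 x0 y L k w S Rs By wB QL Ssep Rs0.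
have lnS : c * l / 2 <= ln (#|S|%:R).
  have SN : expR (c * l) < #|S|%:R * N%:R by apply: lt_le_trans ek _; rewrite -natrM ler_nat.
  have h1 : c * l < ln (#|S|%:R) + ln (N%:R).
    by rewrite -lnM ?posrE ?ltr0n // -{1}(expRK (c * l)) ltr_ln ?posrE ?expR_gt0 ?mulr_gt0 ?ltr0n.
  have h2 : 2 * ln N%:R <= l * c by rewrite -ler_pdivrMr.
  lra.
apply: (limn_esup_lb (N := (2 * (L + m))%N)) => n Hn.
have [Ln n0] := nat_ii2 Hn m0.
have BCn := BC n Ln.
set j := ((n - L) %/ m)%N in BCn.
have hn : (n <= 2 * (j * m))%N.
  by apply: (nat_ii (r := ((n - L) %% m)%N)); [exact: divn_eq | exact: ltn_pmod | ].
have d0 : 0 <= delta by apply: le_trans (ltW dA).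
case E : (sep_count d n Rs delta x0) => [sc| |].
- rewrite E lee_fin in BCn; rewrite /elog_over lee_fin.
  have sc0 : 0 < sc by apply: lt_le_trans BCn; rewrite ltr0n expn_gt0 S1.
  apply: le_trans (arith_ii (n := n%:R) (j := j%:R) (m := m%:R) c0 s0 l0 _ _ lnS ms3 _) _.
  + by rewrite ltr0n.
  + exact: ler0n.
  + by move: hn; rewrite -(ler_nat R) !natrM.
  + rewrite ler_wpM2r ?invr_ge0 ?ler0n // mulr_natl -lnXn ?ltr0n //.
    by rewrite ler_ln ?posrE ?exprn_gt0 ?ltr0n // -natrX.
- by rewrite /elog_over leey.
- by have := sep_count_ge1 dm n Rs x0 d0; rewrite E.
Qed.

End PartII.
Lemma limn_esup_mono (R : realType) (u v : nat -> \bar R) :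
  (forall n, (u n <= v n)%E) -> (limn_esup u <= limn_esup v)%E.
Proof.
move=> uv; rewrite /limn_esup !limf_esupE; apply: le_ereal_inf_tmp => _ [V hV <-].
apply: ge_ereal_inf; exists (ereal_sup (u @` V)); first by exists V.
apply: ge_ereal_sup => _ [n Vn <-]; apply: le_trans (uv n) _.
by apply: ereal_sup_ubound; exists n.
Qed.

Lemma elog_mono (R : realType) n (a b : \bar R) : (1 <= a)%E -> (a <= b)%E ->
  (elog_over n a <= elog_over n b)%E.
Proof.
case: a => [x| |] //; case: b => [y| |] //; rewrite ?lee_fin => x1 xy.
- rewrite ler_wpM2r ?invr_ge0 ?ler0n // ler_ln // posrE.
  + exact: lt_le_trans x1.
  + exact: lt_le_trans (le_trans x1 xy).
- by rewrite /elog_over leey.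
Qed.

Section PartIIMain.
Variables (R : realType) (X : Type) (d : X -> X -> R).
Hypothesis dm : is_metric d.

Lemma inner_mono x0 delta : 0 <= delta ->
  {homo (fun Rs => limn_esup (fun n => elog_over n (sep_count d n Rs delta x0))) :
     a b / a <= b >-> (b <= a)%E}.
Proof.
move=> d0 a b ab; apply: limn_esup_mono => n; apply: elog_mono.
  exact: sep_count_ge1.
exact: sep_count_mono.
Qed.

Lemma part_ii : quasigeodesic d -> bounded_geometry d ->
  (0 < limf_esup (ball_growth d) (pinfty_nbhs R))%E ->
  forall x0 : X, coarse_entropy d x0 = +oo%E.
Proof.
move=> qg bg H x0.
have [c [c0 Hc]] := extract_c H.
case: qg => C [A [C1 [A0 Hq]]].
have HH : forall x, exists f : X -> R -> X, forall x',
    f x' 0 = x /\ f x' (d x x') = x' /\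
    forall s t, 0 <= s <= d x x' -> 0 <= t <= d x x' ->
      C^-1 * `|s - t| - A <= d (f x' s) (f x' t) <= C * `|s - t| + A.
  by move=> x; have [f hf] := choice (Hq x); exists f.
have [Pq HP] : exists Pq : X -> X -> R -> X, forall x x',
    Pq x x' 0 = x /\ Pq x x' (d x x') = x' /\
    forall s t, 0 <= s <= d x x' -> 0 <= t <= d x x' ->
      C^-1 * `|s - t| - A <= d (Pq x x' s) (Pq x x' t) <= C * `|s - t| + A.
  have [g hg] := choice (fun x => (HH x)); by exists g.
have HP2 : forall x x', Pq x x' 0 = x /\ Pq x x' (d x x') = x' /\
    forall u v, 0 <= u <= d x x' -> 0 <= v <= d x x' -> d (Pq x x' u) (Pq x x' v) <= C * `|u - v| + A.
  move=> x x'; have [h1 [h2 h3]] := HP x x'; split => //; split => // u v hu hv.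
  by case/andP: (h3 u v hu hv).
have C0 : 0 < C by apply: lt_le_trans C1.
rewrite /coarse_entropy; apply: cvg_lim => //.
apply/cvgeyPge => M.
exists (A + 12 * C * `|M| / c); split; first by rewrite num_real.
move=> delta /= hd.
have dA : A < delta.
  apply: le_lt_trans hd; rewrite lerDl; apply: divr_ge0; last exact: ltW.
  by rewrite mulr_ge0 // mulr_ge0 // ltW.
have d0 : 0 <= delta by apply: le_trans (ltW dA).
set f := fun Rs => limn_esup (fun n => elog_over n (sep_count d n Rs delta x0)).
have -> : lim (f Rs @[Rs --> +oo]) = ereal_inf (range f).
  by apply: cvg_lim => //; apply: nonincreasing_cvge; exact: inner_mono.
apply: le_ereal_inf_tmp => _ [Rs _ <-].
have Hg : forall Rs, 0 < Rs -> ((c * ((delta - A) / C) / 12)%:E <= f Rs)%E.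
  by move=> Rs' Rs0; exact: (inner_lb_ii dm x0 HP2 C1 A0 bg c0 Hc dA Rs0).
have HgM : (M%:E <= (c * ((delta - A) / C) / 12)%:E)%E.
  rewrite lee_fin.
  have h1 : 12 * C * `|M| / c < delta - A by lra.
  have h2 : 12 * C * `|M| < (delta - A) * c by rewrite -ltr_pdivrMr.
  have -> : c * ((delta - A) / C) / 12 = ((delta - A) * c) / (12 * C).
    by field; rewrite gt_eqF.
  rewrite ler_pdivlMr ?mulr_gt0 //; apply: le_trans (ltW h2).
  by rewrite mulrC ler_wpM2l ?ler_norm // mulr_ge0 // ltW.
apply: le_trans HgM _.
case: (ltP 0 Rs) => Rs0; first exact: Hg.
apply: le_trans (Hg 1 ltr01) _.
exact: (inner_mono x0 d0 (le_trans Rs0 ler01)).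
Qed.

End PartIIMain.

Unset Implicit Arguments.

Theorem mainTheorem16 (R : realType) (X : Type) (d : X -> X -> R) :
  is_metric d -> quasigeodesic d -> bounded_geometry d ->
  ((ball_growth d l @[l --> +oo] --> 0%E) ->
     forall x0 : X, coarse_entropy d x0 = 0%E) /\
  ((0 < limf_esup (ball_growth d) (pinfty_nbhs R))%E ->
     forall x0 : X, coarse_entropy d x0 = +oo%E).
Proof.
move=> dm qg bg; split.
- by move=> H x0; exact: (part_i dm bg H x0).
- by move=> H x0; exact: (part_ii dm qg bg H x0).
Qed.
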